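(* Let $(l_1:l_2:l_3:l_4)$ be a point on the tetragonal surface $\mathcal{K}^{\mathrm{Tet}}$ (over an algebraic closure of the base field). Then $K_2(l_1,l_2,l_3)=K_3(l_1,l_2,l_3)=K_4(l_1,l_2,l_3)=0$ if and only if $l_1=l_2=l_3=0$.
   Context: Let $k$ be a field of characteristic $\neq2,3$ and $\mu_1,\dots,\mu_4\in k$ nonzero squared theta constants with $\hat\mu_1=(\mu_1+\mu_2+\mu_3+\mu_4)/2$, $\hat\mu_2=(\mu_1+\mu_2-\mu_3-\mu_4)/2$, $\hat\mu_3=(\mu_1-\mu_2+\mu_3-\mu_4)/2$, $\hat\mu_4=(\mu_1-\mu_2-\mu_3+\mu_4)/2$ all nonzero, and $\mu_1\mu_4\neq\mu_2\mu_3$, $\mu_1\mu_3\neq\mu_2\mu_4$, $\mu_1\mu_2\neq\mu_3\mu_4$ (so that the associated squared Kummer surface is a genuine Kummer surface of a genus-2 Jacobian). Set $t=16\mu_1\mu_2\mu_3\mu_4\hat\mu_1\hat\mu_2\hat\mu_3\hat\mu_4$ and $r_1=(\mu_1\mu_3-\mu_2\mu_4)(\mu_1\mu_4-\mu_2\mu_3)$, $s_1=(\mu_1\mu_2-\mu_3\mu_4)(\mu_1\mu_2+\mu_3\mu_4)$, $r_2=(\mu_1\mu_2-\mu_3\mu_4)(\mu_1\mu_4-\mu_2\mu_3)$, $s_2=(\mu_1\mu_3-\mu_2\mu_4)(\mu_1\mu_3+\mu_2\mu_4)$, $r_3=(\mu_1\mu_2-\mu_3\mu_4)(\mu_1\mu_3-\mu_2\mu_4)$,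 $s_3=(\mu_1\mu_4-\mu_2\mu_3)(\mu_1\mu_4+\mu_2\mu_3)$. The tetragonal surface $\mathcal{K}^{\mathrm{Tet}}\subset\mathbb{P}^3$ is $4tL_1L_2L_3L_4=r_1^2(L_1L_2+L_3L_4)^2+r_2^2(L_1L_3+L_2L_4)^2+r_3^2(L_1L_4+L_2L_3)^2-2r_1s_1((L_1^2+L_2^2)L_3L_4+L_1L_2(L_3^2+L_4^2))-2r_2s_2((L_1^2+L_3^2)L_2L_4+L_1L_3(L_2^2+L_4^2))-2r_3s_3((L_1^2+L_4^2)L_2L_3+L_1L_4(L_2^2+L_3^2))$, which can be rewritten as $K_4-2K_3L_4+K_2L_4^2=0$ with $K_2=r_3^2L_1^2+r_2^2L_2^2+r_1^2L_3^2-2(r_3s_3L_2L_3+r_2s_2L_1L_3+r_1s_1L_1L_2)$, $K_3=r_1s_1(L_1^2+L_2^2)L_3+r_2s_2(L_1^2+L_3^2)L_2+r_3s_3(L_2^2+L_3^2)L_1+(2t-(r_1^2+r_2^2+r_3^2))L_1L_2L_3$, $K_4=r_3^2L_2^2L_3^2+r_2^2L_1^2L_3^2+r_1^2L_1^2L_2^2-2(r_3s_3L_1+r_2s_2L_2+r_1s_1L_3)L_1L_2L_3$. The vanishing of the homogeneous $K_i$ at a projective point does not depend on the representative. *)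

(* Defs.v *)
From HB Require Import structures.
From mathcomp Require Import all_boot all_order all_algebra.
Set Implicit Arguments. Unset Strict Implicit. Unset Printing Implicit Defensive.
Import Order.TTheory GRing.Theory.
Local Open Scope ring_scope.

Section Tet.
Variable F : fieldType.
Variables m1 m2 m3 m4 : F.

Definition muh1 : F := (m1 + m2 + m3 + m4) / 2%:R.
Definition muh2 : F := (m1 + m2 - m3 - m4) / 2%:R.
Definition muh3 : F := (m1 - m2 + m3 - m4) / 2%:R.
Definition muh4 : F := (m1 - m2 - m3 + m4) / 2%:R.

Definition tet_t : F := 16%:R * m1 * m2 * m3 * m4 * muh1 * muh2 * muh3 * muh4.

Definition tet_r1 : F := (m1 * m3 - m2 * m4) * (m1 * m4 - m2 * m3).
Definition tet_s1 : F := (m1 * m2 - m3 * m4) * (m1 * m2 + m3 * m4).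
Definition tet_r2 : F := (m1 * m2 - m3 * m4) * (m1 * m4 - m2 * m3).
Definition tet_s2 : F := (m1 * m3 - m2 * m4) * (m1 * m3 + m2 * m4).
Definition tet_r3 : F := (m1 * m2 - m3 * m4) * (m1 * m3 - m2 * m4).
Definition tet_s3 : F := (m1 * m4 - m2 * m3) * (m1 * m4 + m2 * m3).

Definition tet_eq (L1 L2 L3 L4 : F) : Prop :=
  4%:R * tet_t * L1 * L2 * L3 * L4 =
    tet_r1 ^+ 2 * (L1 * L2 + L3 * L4) ^+ 2
  + tet_r2 ^+ 2 * (L1 * L3 + L2 * L4) ^+ 2
  + tet_r3 ^+ 2 * (L1 * L4 + L2 * L3) ^+ 2
  - 2%:R * tet_r1 * tet_s1 * ((L1 ^+ 2 + L2 ^+ 2) * L3 * L4 + L1 * L2 * (L3 ^+ 2 + L4 ^+ 2))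
  - 2%:R * tet_r2 * tet_s2 * ((L1 ^+ 2 + L3 ^+ 2) * L2 * L4 + L1 * L3 * (L2 ^+ 2 + L4 ^+ 2))
  - 2%:R * tet_r3 * tet_s3 * ((L1 ^+ 2 + L4 ^+ 2) * L2 * L3 + L1 * L4 * (L2 ^+ 2 + L3 ^+ 2)).

Definition tet_K2 (L1 L2 L3 : F) : F :=
  tet_r3 ^+ 2 * L1 ^+ 2 + tet_r2 ^+ 2 * L2 ^+ 2 + tet_r1 ^+ 2 * L3 ^+ 2
  - 2%:R * (tet_r3 * tet_s3 * L2 * L3 + tet_r2 * tet_s2 * L1 * L3 + tet_r1 * tet_s1 * L1 * L2).

Definition tet_K3 (L1 L2 L3 : F) : F :=
  tet_r1 * tet_s1 * (L1 ^+ 2 + L2 ^+ 2) * L3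
  + tet_r2 * tet_s2 * (L1 ^+ 2 + L3 ^+ 2) * L2
  + tet_r3 * tet_s3 * (L2 ^+ 2 + L3 ^+ 2) * L1
  + (2%:R * tet_t - (tet_r1 ^+ 2 + tet_r2 ^+ 2 + tet_r3 ^+ 2)) * L1 * L2 * L3.

Definition tet_K4 (L1 L2 L3 : F) : F :=
  tet_r3 ^+ 2 * L2 ^+ 2 * L3 ^+ 2 + tet_r2 ^+ 2 * L1 ^+ 2 * L3 ^+ 2
  + tet_r1 ^+ 2 * L1 ^+ 2 * L2 ^+ 2
  - 2%:R * (tet_r3 * tet_s3 * L1 + tet_r2 * tet_s2 * L2 + tet_r1 * tet_s1 * L3) * L1 * L2 * L3.

End Tet.

(* Main.v *)
Require Import Defs.
From HB Require Import structures.
From mathcomp Require Import all_boot all_order all_algebra.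
From mathcomp Require Import ring.
Import GRing.Theory.
Set Implicit Arguments. Unset Strict Implicit.
Local Open Scope ring_scope.

Section Core.
Variable F : fieldType.
Variables m1 m2 m3 m4 : F.

Definition cA := m1 * m2 - m3 * m4.
Definition cB := m1 * m3 - m2 * m4.
Definition cC := m1 * m4 - m2 * m3.
Definition cAp := m1 * m2 + m3 * m4.
Definition cBp := m1 * m3 + m2 * m4.
Definition cCp := m1 * m4 + m2 * m3.
Definition cd := m1^+2 + m2^+2 - m3^+2 - m4^+2.
Definition cH := m1 * m2 * m3 * m4 * (m1+m2+m3+m4) * (m1+m2-m3-m4) * (m1-m2+m3-m4) * (m1-m2-m3+m4).

Definition F1 (x y : F) : F :=
  cA * cB * cC * (4%:R * m1 * m2 * m3 * m4) * x^+2 + 2%:R * (cA * cB * cC * cBp * cCp + cB^+2 * cC^+2 * cAp) * x * y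
  + cA * cB * cC * (4%:R * m1 * m2 * m3 * m4) * y^+2.

Definition Gf (x y u : F) : F :=
  cA^+2 * cB^+2 * y^+2 * u^+2 + cA^+2 * cC^+2 * x^+2 * u^+2 + cB^+4 * cC^+4 * x^+2 * y^+2
  - 2%:R * cA * cB^+2 * cC^+2 * (cCp * x+cBp * y) * x * y * u - 2%:R * cA * cAp * cB * cC * x * y * u^+2.

Definition ff (x y : F) : F := cA * x^+2 + cd * x * y + cA * y^+2.

Definition Q2 : F := m1^+10 * m2^+6 * m3^+2 * m4^+2 - 2%:R * m1^+9 * m2^+7 * m3^+3 * m4 + 2%:R * m1^+9 * m2^+7 * m3 * m4^+3 - 6%:R * m1^+9 * m2^+5 * m3^+3 * m4^+3 + m1^+8 * m2^+8 * m3^+4 - 4%:R * m1^+8 * m2^+8 * m3^+2 * m4^+2 + m1^+8 * m2^+8 * m4^+4 + 12%:R * m1^+8 * m2^+6 * m3^+4 * m4^+2 - 12%:R * m1^+8 * m2^+6 * m3^+2 * m4^+4 + 15%:R * m1^+8 * m2^+4 * m3^+4 * m4^+4 + 2%:R * m1^+7 * m2^+9 * m3^+3 * m4 - 2%:R * m1^+7 * m2^+9 * m3 * m4^+3 - 6%:R * m1^+7 * m2^+7 * m3^+5 * m4 + 24%:R * m1^+7 * m2^+7 * m3^+3 * m4^+3 - 6%:R * m1^+7 * m2^+7 * m3 * m4^+5 - 30%:R * m1^+7 * m2^+5 * m3^+5 * m4^+3 + 30%:R * m1^+7 * m2^+5 * m3^+3 * m4^+5 - 20%:R * m1^+7 *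 m2^+3 * m3^+5 * m4^+5 + m1^+6 * m2^+10 * m3^+2 * m4^+2 - 12%:R * m1^+6 * m2^+8 * m3^+4 * m4^+2 + 12%:R * m1^+6 * m2^+8 * m3^+2 * m4^+4 + 15%:R * m1^+6 * m2^+6 * m3^+6 * m4^+2 - 60%:R * m1^+6 * m2^+6 * m3^+4 * m4^+4 + 15%:R * m1^+6 * m2^+6 * m3^+2 * m4^+6 + 40%:R * m1^+6 * m2^+4 * m3^+6 * m4^+4 - 40%:R * m1^+6 * m2^+4 * m3^+4 * m4^+6 + 15%:R * m1^+6 * m2^+2 * m3^+6 * m4^+6 - 6%:R * m1^+5 * m2^+9 * m3^+3 * m4^+3 + 30%:R * m1^+5 * m2^+7 * m3^+5 * m4^+3 - 30%:R * m1^+5 * m2^+7 * m3^+3 * m4^+5 - 20%:R * m1^+5 * m2^+5 * m3^+7 * m4^+3 + 80%:R * m1^+5 * m2^+5 * m3^+5 * m4^+5 - 20%:R * m1^+5 * m2^+5 * m3^+3 * m4^+7 - 30%:R * m1^+5 * m2^+3 * m3^+7 * m4^+5 + 30%:R * m1^+5 * m2^+3 * m3^+5 * m4^+7 - 6%:R * m1^+5 * m2 * m3^+7 * m4^+7 + 15%:R * m1^+4 * m2^+8 * m3^+4 * m4^+4 - 40%:R * m1^+4 * m2^+6 * m3^+6 * m4^+4 + 40%:R * m1^+4 * m2^+6 * m3^+4 * m4^+6 + 15%:R * m1^+4 * m2^+4 * m3^+8 * m4^+4 - 60%:R * m1^+4 * m2^+4 * m3^+6 * m4^+6 + 15%:R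 * m1^+4 * m2^+4 * m3^+4 * m4^+8 + 12%:R * m1^+4 * m2^+2 * m3^+8 * m4^+6 - 12%:R * m1^+4 * m2^+2 * m3^+6 * m4^+8 + m1^+4 * m3^+8 * m4^+8 - 20%:R * m1^+3 * m2^+7 * m3^+5 * m4^+5 + 30%:R * m1^+3 * m2^+5 * m3^+7 * m4^+5 - 30%:R * m1^+3 * m2^+5 * m3^+5 * m4^+7 - 6%:R * m1^+3 * m2^+3 * m3^+9 * m4^+5 + 24%:R * m1^+3 * m2^+3 * m3^+7 * m4^+7 - 6%:R * m1^+3 * m2^+3 * m3^+5 * m4^+9 - 2%:R * m1^+3 * m2 * m3^+9 * m4^+7 + 2%:R * m1^+3 * m2 * m3^+7 * m4^+9 + 15%:R * m1^+2 * m2^+6 * m3^+6 * m4^+6 - 12%:R * m1^+2 * m2^+4 * m3^+8 * m4^+6 + 12%:R * m1^+2 * m2^+4 * m3^+6 * m4^+8 + m1^+2 * m2^+2 * m3^+10 * m4^+6 - 4%:R * m1^+2 * m2^+2 * m3^+8 * m4^+8 + m1^+2 * m2^+2 * m3^+6 * m4^+10 - 6%:R * m1 * m2^+5 * m3^+7 * m4^+7 + 2%:R * m1 * m2^+3 * m3^+9 * m4^+7 - 2%:R * m1 * m2^+3 * m3^+7 * m4^+9 + m2^+4 * m3^+8 * m4^+8.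
Definition Q1 : F := - m1^+11 * m2^+5 * m3^+2 * m4^+2 + 3%:R * m1^+10 * m2^+4 * m3^+3 * m4^+3 + m1^+9 * m2^+7 * m3^+4 - m1^+9 * m2^+7 * m3^+2 * m4^+2 + m1^+9 * m2^+7 * m4^+4 + m1^+9 * m2^+5 * m3^+4 * m4^+2 + m1^+9 * m2^+5 * m3^+2 * m4^+4 - 2%:R * m1^+9 * m2^+3 * m3^+4 * m4^+4 - 3%:R * m1^+8 * m2^+6 * m3^+5 * m4 + 3%:R * m1^+8 * m2^+6 * m3^+3 * m4^+3 - 3%:R * m1^+8 * m2^+6 * m3 * m4^+5 - 3%:R * m1^+8 * m2^+4 * m3^+5 * m4^+3 - 3%:R * m1^+8 * m2^+4 * m3^+3 * m4^+5 - 2%:R * m1^+8 * m2^+2 * m3^+5 * m4^+5 + m1^+7 * m2^+9 * m3^+4 - m1^+7 * m2^+9 * m3^+2 * m4^+2 + m1^+7 * m2^+9 * m4^+4 - m1^+7 * m2^+7 * m3^+6 - m1^+7 * m2^+7 * m3^+4 * m4^+2 - m1^+7 * m2^+7 * m3^+2 * m4^+4 - m1^+7 * m2^+7 * m4^+6 + 2%:R * m1^+7 * m2^+5 * m3^+6 * m4^+2 - 2%:R * m1^+7 * m2^+5 * m3^+4 * m4^+4 + 2%:R * m1^+7 * m2^+5 * m3^+2 * m4^+6 + 2%:R * m1^+7 * m2^+3 * m3^+6 * m4^+4 + 2%:R * m1^+7 * m2^+3 * m3^+4 * m4^+6 + 3%:R * m1^+7 * m2 * m3^+6 * m4^+6 -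 3%:R * m1^+6 * m2^+8 * m3^+5 * m4 + 3%:R * m1^+6 * m2^+8 * m3^+3 * m4^+3 - 3%:R * m1^+6 * m2^+8 * m3 * m4^+5 + 3%:R * m1^+6 * m2^+6 * m3^+7 * m4 + 3%:R * m1^+6 * m2^+6 * m3^+5 * m4^+3 + 3%:R * m1^+6 * m2^+6 * m3^+3 * m4^+5 + 3%:R * m1^+6 * m2^+6 * m3 * m4^+7 + 2%:R * m1^+6 * m2^+4 * m3^+7 * m4^+3 - 2%:R * m1^+6 * m2^+4 * m3^+5 * m4^+5 + 2%:R * m1^+6 * m2^+4 * m3^+3 * m4^+7 + 2%:R * m1^+6 * m2^+2 * m3^+7 * m4^+5 + 2%:R * m1^+6 * m2^+2 * m3^+5 * m4^+7 - m1^+6 * m3^+7 * m4^+7 - m1^+5 * m2^+11 * m3^+2 * m4^+2 + m1^+5 * m2^+9 * m3^+4 * m4^+2 + m1^+5 * m2^+9 * m3^+2 * m4^+4 + 2%:R * m1^+5 * m2^+7 * m3^+6 * m4^+2 - 2%:R * m1^+5 * m2^+7 * m3^+4 * m4^+4 + 2%:R * m1^+5 * m2^+7 * m3^+2 * m4^+6 - 2%:R * m1^+5 * m2^+5 * m3^+8 * m4^+2 - 2%:R * m1^+5 * m2^+5 * m3^+6 * m4^+4 - 2%:R * m1^+5 * m2^+5 * m3^+4 * m4^+6 - 2%:R * m1^+5 * m2^+5 * m3^+2 * m4^+8 - 3%:R * m1^+5 * m2^+3 * m3^+8 * m4^+4 + 3%:R * m1^+5 * m2^+3 * m3^+6 *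 m4^+6 - 3%:R * m1^+5 * m2^+3 * m3^+4 * m4^+8 - 3%:R * m1^+5 * m2 * m3^+8 * m4^+6 - 3%:R * m1^+5 * m2 * m3^+6 * m4^+8 + 3%:R * m1^+4 * m2^+10 * m3^+3 * m4^+3 - 3%:R * m1^+4 * m2^+8 * m3^+5 * m4^+3 - 3%:R * m1^+4 * m2^+8 * m3^+3 * m4^+5 + 2%:R * m1^+4 * m2^+6 * m3^+7 * m4^+3 - 2%:R * m1^+4 * m2^+6 * m3^+5 * m4^+5 + 2%:R * m1^+4 * m2^+6 * m3^+3 * m4^+7 - 2%:R * m1^+4 * m2^+4 * m3^+9 * m4^+3 - 2%:R * m1^+4 * m2^+4 * m3^+7 * m4^+5 - 2%:R * m1^+4 * m2^+4 * m3^+5 * m4^+7 - 2%:R * m1^+4 * m2^+4 * m3^+3 * m4^+9 + m1^+4 * m2^+2 * m3^+9 * m4^+5 - m1^+4 * m2^+2 * m3^+7 * m4^+7 + m1^+4 * m2^+2 * m3^+5 * m4^+9 + m1^+4 * m3^+9 * m4^+7 + m1^+4 * m3^+7 * m4^+9 - 2%:R * m1^+3 * m2^+9 * m3^+4 * m4^+4 + 2%:R * m1^+3 * m2^+7 * m3^+6 * m4^+4 + 2%:R * m1^+3 * m2^+7 * m3^+4 * m4^+6 - 3%:R * m1^+3 * m2^+5 * m3^+8 * m4^+4 + 3%:R * m1^+3 * m2^+5 * m3^+6 * m4^+6 - 3%:R * m1^+3 * m2^+5 * m3^+4 * m4^+8 + 3%:R * m1^+3 * m2^+3 * m3^+10 *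 m4^+4 + 3%:R * m1^+3 * m2^+3 * m3^+8 * m4^+6 + 3%:R * m1^+3 * m2^+3 * m3^+6 * m4^+8 + 3%:R * m1^+3 * m2^+3 * m3^+4 * m4^+10 - 2%:R * m1^+2 * m2^+8 * m3^+5 * m4^+5 + 2%:R * m1^+2 * m2^+6 * m3^+7 * m4^+5 + 2%:R * m1^+2 * m2^+6 * m3^+5 * m4^+7 + m1^+2 * m2^+4 * m3^+9 * m4^+5 - m1^+2 * m2^+4 * m3^+7 * m4^+7 + m1^+2 * m2^+4 * m3^+5 * m4^+9 - m1^+2 * m2^+2 * m3^+11 * m4^+5 - m1^+2 * m2^+2 * m3^+9 * m4^+7 - m1^+2 * m2^+2 * m3^+7 * m4^+9 - m1^+2 * m2^+2 * m3^+5 * m4^+11 + 3%:R * m1 * m2^+7 * m3^+6 * m4^+6 - 3%:R * m1 * m2^+5 * m3^+8 * m4^+6 - 3%:R * m1 * m2^+5 * m3^+6 * m4^+8 - m2^+6 * m3^+7 * m4^+7 + m2^+4 * m3^+9 * m4^+7 + m2^+4 * m3^+7 * m4^+9.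
Definition Q0 : F := m1^+12 * m2^+4 * m3^+2 * m4^+2 - 2%:R * m1^+11 * m2^+3 * m3^+3 * m4^+3 - 3%:R * m1^+10 * m2^+6 * m3^+2 * m4^+2 - 4%:R * m1^+10 * m2^+4 * m3^+4 * m4^+2 - 4%:R * m1^+10 * m2^+4 * m3^+2 * m4^+4 + m1^+10 * m2^+2 * m3^+4 * m4^+4 + 2%:R * m1^+9 * m2^+7 * m3^+3 * m4 - 2%:R * m1^+9 * m2^+7 * m3 * m4^+3 + 18%:R * m1^+9 * m2^+5 * m3^+3 * m4^+3 + 8%:R * m1^+9 * m2^+3 * m3^+5 * m4^+3 + 8%:R * m1^+9 * m2^+3 * m3^+3 * m4^+5 + m1^+8 * m2^+8 * m3^+4 + 2%:R * m1^+8 * m2^+8 * m3^+2 * m4^+2 + m1^+8 * m2^+8 * m4^+4 - 8%:R * m1^+8 * m2^+6 * m3^+4 * m4^+2 + 16%:R * m1^+8 * m2^+6 * m3^+2 * m4^+4 + 6%:R * m1^+8 * m2^+4 * m3^+6 * m4^+2 - 17%:R * m1^+8 * m2^+4 * m3^+4 * m4^+4 + 6%:R * m1^+8 * m2^+4 * m3^+2 * m4^+6 - 4%:R * m1^+8 * m2^+2 * m3^+6 * m4^+4 - 4%:R * m1^+8 * m2^+2 * m3^+4 * m4^+6 - 2%:R * m1^+7 * m2^+9 * m3^+3 * m4 + 2%:R * m1^+7 * m2^+9 * m3 * m4^+3 - 6%:R * m1^+7 * m2^+7 * m3^+5 * m4 - 20%:R * m1^+7 * m2^+7 * m3^+3 *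 m4^+3 - 6%:R * m1^+7 * m2^+7 * m3 * m4^+5 - 10%:R * m1^+7 * m2^+5 * m3^+5 * m4^+3 - 70%:R * m1^+7 * m2^+5 * m3^+3 * m4^+5 - 12%:R * m1^+7 * m2^+3 * m3^+7 * m4^+3 - 12%:R * m1^+7 * m2^+3 * m3^+5 * m4^+5 - 12%:R * m1^+7 * m2^+3 * m3^+3 * m4^+7 - 3%:R * m1^+6 * m2^+10 * m3^+2 * m4^+2 + 16%:R * m1^+6 * m2^+8 * m3^+4 * m4^+2 - 8%:R * m1^+6 * m2^+8 * m3^+2 * m4^+4 + 19%:R * m1^+6 * m2^+6 * m3^+6 * m4^+2 + 98%:R * m1^+6 * m2^+6 * m3^+4 * m4^+4 + 19%:R * m1^+6 * m2^+6 * m3^+2 * m4^+6 - 4%:R * m1^+6 * m2^+4 * m3^+8 * m4^+2 + 32%:R * m1^+6 * m2^+4 * m3^+6 * m4^+4 + 112%:R * m1^+6 * m2^+4 * m3^+4 * m4^+6 - 4%:R * m1^+6 * m2^+4 * m3^+2 * m4^+8 + 6%:R * m1^+6 * m2^+2 * m3^+8 * m4^+4 + 19%:R * m1^+6 * m2^+2 * m3^+6 * m4^+6 + 6%:R * m1^+6 * m2^+2 * m3^+4 * m4^+8 + 18%:R * m1^+5 * m2^+9 * m3^+3 * m4^+3 - 70%:R * m1^+5 * m2^+7 * m3^+5 * m4^+3 - 10%:R * m1^+5 * m2^+7 * m3^+3 * m4^+5 - 12%:R * m1^+5 * m2^+5 * m3^+7 * m4^+3 - 160%:R * m1^+5 *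 m2^+5 * m3^+5 * m4^+5 - 12%:R * m1^+5 * m2^+5 * m3^+3 * m4^+7 + 8%:R * m1^+5 * m2^+3 * m3^+9 * m4^+3 - 10%:R * m1^+5 * m2^+3 * m3^+7 * m4^+5 - 70%:R * m1^+5 * m2^+3 * m3^+5 * m4^+7 + 8%:R * m1^+5 * m2^+3 * m3^+3 * m4^+9 - 6%:R * m1^+5 * m2 * m3^+7 * m4^+7 + m1^+4 * m2^+12 * m3^+2 * m4^+2 - 4%:R * m1^+4 * m2^+10 * m3^+4 * m4^+2 - 4%:R * m1^+4 * m2^+10 * m3^+2 * m4^+4 + 6%:R * m1^+4 * m2^+8 * m3^+6 * m4^+2 - 17%:R * m1^+4 * m2^+8 * m3^+4 * m4^+4 + 6%:R * m1^+4 * m2^+8 * m3^+2 * m4^+6 - 4%:R * m1^+4 * m2^+6 * m3^+8 * m4^+2 + 112%:R * m1^+4 * m2^+6 * m3^+6 * m4^+4 + 32%:R * m1^+4 * m2^+6 * m3^+4 * m4^+6 - 4%:R * m1^+4 * m2^+6 * m3^+2 * m4^+8 + m1^+4 * m2^+4 * m3^+10 * m4^+2 - 17%:R * m1^+4 * m2^+4 * m3^+8 * m4^+4 + 98%:R * m1^+4 * m2^+4 * m3^+6 * m4^+6 - 17%:R * m1^+4 * m2^+4 * m3^+4 * m4^+8 + m1^+4 * m2^+4 * m3^+2 * m4^+10 - 4%:R * m1^+4 * m2^+2 * m3^+10 * m4^+4 - 8%:R * m1^+4 * m2^+2 * m3^+8 * m4^+6 + 16%:R * m1^+4 * m2^+2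 * m3^+6 * m4^+8 - 4%:R * m1^+4 * m2^+2 * m3^+4 * m4^+10 + m1^+4 * m3^+8 * m4^+8 - 2%:R * m1^+3 * m2^+11 * m3^+3 * m4^+3 + 8%:R * m1^+3 * m2^+9 * m3^+5 * m4^+3 + 8%:R * m1^+3 * m2^+9 * m3^+3 * m4^+5 - 12%:R * m1^+3 * m2^+7 * m3^+7 * m4^+3 - 12%:R * m1^+3 * m2^+7 * m3^+5 * m4^+5 - 12%:R * m1^+3 * m2^+7 * m3^+3 * m4^+7 + 8%:R * m1^+3 * m2^+5 * m3^+9 * m4^+3 - 70%:R * m1^+3 * m2^+5 * m3^+7 * m4^+5 - 10%:R * m1^+3 * m2^+5 * m3^+5 * m4^+7 + 8%:R * m1^+3 * m2^+5 * m3^+3 * m4^+9 - 2%:R * m1^+3 * m2^+3 * m3^+11 * m4^+3 + 18%:R * m1^+3 * m2^+3 * m3^+9 * m4^+5 - 20%:R * m1^+3 * m2^+3 * m3^+7 * m4^+7 + 18%:R * m1^+3 * m2^+3 * m3^+5 * m4^+9 - 2%:R * m1^+3 * m2^+3 * m3^+3 * m4^+11 + 2%:R * m1^+3 * m2 * m3^+9 * m4^+7 - 2%:R * m1^+3 * m2 * m3^+7 * m4^+9 + m1^+2 * m2^+10 * m3^+4 * m4^+4 - 4%:R * m1^+2 * m2^+8 * m3^+6 * m4^+4 - 4%:R * m1^+2 * m2^+8 * m3^+4 * m4^+6 + 6%:R * m1^+2 * m2^+6 * m3^+8 * m4^+4 + 19%:R * m1^+2 * m2^+6 * m3^+6 *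 m4^+6 + 6%:R * m1^+2 * m2^+6 * m3^+4 * m4^+8 - 4%:R * m1^+2 * m2^+4 * m3^+10 * m4^+4 + 16%:R * m1^+2 * m2^+4 * m3^+8 * m4^+6 - 8%:R * m1^+2 * m2^+4 * m3^+6 * m4^+8 - 4%:R * m1^+2 * m2^+4 * m3^+4 * m4^+10 + m1^+2 * m2^+2 * m3^+12 * m4^+4 - 3%:R * m1^+2 * m2^+2 * m3^+10 * m4^+6 + 2%:R * m1^+2 * m2^+2 * m3^+8 * m4^+8 - 3%:R * m1^+2 * m2^+2 * m3^+6 * m4^+10 + m1^+2 * m2^+2 * m3^+4 * m4^+12 - 6%:R * m1 * m2^+5 * m3^+7 * m4^+7 - 2%:R * m1 * m2^+3 * m3^+9 * m4^+7 + 2%:R * m1 * m2^+3 * m3^+7 * m4^+9 + m2^+4 * m3^+8 * m4^+8.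

Lemma e1 (x y z : F) :
  (cB * cC)^+2  *  tet_K2 m1 m2 m3 m4 x y z =
  ((cB * cC)^+2 * z - cA * cB * cC * (cCp * y + cBp * x))^+2 - cA * cB * cC * F1 x y.
Proof.
rewrite /tet_K2 /tet_r1 /tet_r2 /tet_r3 /tet_s1 /tet_s2 /tet_s3 /F1 /cA /cB /cC /cAp /cBp /cCp.
ring.
Qed.

Lemma e3 (x y z : F) :
  (cB * cC)^+2  *  tet_K4 m1 m2 m3 m4 x y z = Gf x y (cB * cC * z).
Proof.
rewrite /tet_K4 /tet_r1 /tet_r2 /tet_r3 /tet_s1 /tet_s2 /tet_s3 /Gf /cA /cB /cC /cAp /cBp /cCp.
ring.
Qed.

Lemma e4 (x y : F) : F1 x y = 4%:R * m1 * m2 * m3 * m4 * cB * cC  *  ff x y.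
Proof. rewrite /F1 /ff /cA /cB /cC /cAp /cBp /cCp /cd. ring. Qed.

Lemma e5 (x y : F) :
  cA^+3  *  Gf x y (cA * (cBp * x + cCp * y)) =
  (Q2 * x^+2 + Q1 * x * y + Q0 * y^+2)  *  ff x y - cH^+2 * cA^+2 * y^+3 * (cd * x + cA * y).
Proof.
rewrite /Gf /ff /Q2 /Q1 /Q0 /cH /cA /cB /cC /cAp /cBp /cCp /cd.
ring.
Qed.


Lemma core (x y z : F) :
  m1 * m2 * m3 * m4 != 0 -> cH != 0 ->
  cA != 0 -> cB != 0 -> cC != 0 -> (2%:R : F) != 0 ->
  tet_K2 m1 m2 m3 m4 x y z = 0 -> tet_K4 m1 m2 m3 m4 x y z = 0 ->
  F1 x y = 0 -> [/\ x = 0, y = 0 & z = 0].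
Proof.
move=> hm hH hA hB hC h2 hK2 hK4 hF.
have hBC : cB * cC != 0 by rewrite mulf_neq0.
have hw : (cB * cC) ^+ 2 * z - cA * cB * cC * (cCp * y + cBp * x) = 0.
  have := e1 x y z; rewrite hK2 hF !mulr0 subr0 => /esym /eqP.
  by rewrite expf_eq0 /= => /eqP.
have hu : cB * cC * z = cA * (cBp * x + cCp * y).
  have : cB * cC * (cB * cC * z - cA * (cBp * x + cCp * y)) =
     (cB * cC) ^+ 2 * z - cA * cB * cC * (cCp * y + cBp * x) by ring.
  rewrite hw => /eqP; rewrite mulf_eq0 (negbTE hBC) /= subr_eq0 => /eqP //.
have hG : Gf x y (cA * (cBp * x + cCp * y)) = 0.
  by have := e3 x y z; rewrite hK4 mulr0 hu => /esym.
have h4 : 4%:R * m1 * m2 * m3 * m4 * cB * cC != 0.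
  have -> : 4%:R * m1 * m2 * m3 * m4 * cB * cC = (2%:R * 2%:R) * (m1 * m2 * m3 * m4) * (cB * cC) by ring.
  have h22 : (2%:R * 2%:R : F) != 0 by apply: mulf_neq0.
  have h22m : 2%:R * 2%:R * (m1 * m2 * m3 * m4) != 0 by apply: mulf_neq0.
  by apply: mulf_neq0.
have hf : ff x y = 0.
  have := e4 x y; rewrite hF => /esym /eqP; rewrite mulf_eq0 (negbTE h4) /= => /eqP //.
have hy : y ^+ 3 * (cd * x + cA * y) = 0.
  have := e5 x y; rewrite hG mulr0 hf mulr0 sub0r => /esym /eqP; rewrite oppr_eq0.
  have -> : cH ^+ 2 * cA ^+ 2 * y ^+ 3 * (cd * x + cA * y) = (cH ^+ 2 * cA ^+ 2) * (y ^+ 3 * (cd * x + cA * y)) by ring.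
  have hHA : cH ^+ 2 * cA ^+ 2 != 0 by apply: mulf_neq0; apply: expf_neq0.
  by rewrite mulf_eq0 (negbTE hHA) /= => /eqP.
have hy2 : cA * y * (cd * x + cA * y) = 0.
  move: hy => /eqP; rewrite mulf_eq0 expf_eq0 /= => /orP [/eqP -> | /eqP ->]; by rewrite ?mulr0 ?mul0r.
have hx : x = 0.
  have : cA * ff x y = cA ^+ 2 * x ^+ 2 + cA * y * (cd * x + cA * y) by rewrite /ff; ring.
  rewrite hf hy2 mulr0 addr0 => /esym /eqP; rewrite mulf_eq0 !expf_eq0 /= (negbTE hA) /= => /eqP //.
have hy0 : y = 0.
  have e : cA * y ^+ 4 = y ^+ 3 * (cd * x + cA * y) by rewrite hx; ring.
  rewrite hy in e; move: e => /eqP; rewrite mulf_eq0 (negbTE hA) /= expf_eq0 => /andP [_ /eqP] //.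
split => //.
move: hu => /eqP; rewrite hx hy0 !mulr0 addr0 mulr0 mulf_eq0 (negbTE hBC) /= => /eqP //.
Qed.

End Core.

Lemma tet_t_eq (F : fieldType) (m1 m2 m3 m4 : F) : (2%:R : F) != 0 ->
  tet_t m1 m2 m3 m4 = m1 * m2 * m3 * m4 * (m1+m2+m3+m4)*(m1+m2-m3-m4)*(m1-m2+m3-m4)*(m1-m2-m3+m4).
Proof.
move=> h2; rewrite /tet_t /muh1 /muh2 /muh3 /muh4.
by field.
Qed.

Lemma delta (F : fieldType) (m1 m2 m3 m4 x y z : F) : (2%:R : F) != 0 ->
  F1 m1 m2 m3 m4 x y * F1 m1 m3 m2 m4 x z * F1 m1 m4 m3 m2 z y =
  cA m1 m2 m3 m4 * cB m1 m2 m3 m4 * cC m1 m2 m3 m4 * (4%:R * m1 * m2 * m3 * m4) ^+ 2 *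
  (tet_K3 m1 m2 m3 m4 x y z ^+ 2 - tet_K2 m1 m2 m3 m4 x y z * tet_K4 m1 m2 m3 m4 x y z).
Proof.
move=> h2.
rewrite /tet_K3 (tet_t_eq _ _ _ _ h2) /tet_K2 /tet_K4 /tet_r1 /tet_r2 /tet_r3 /tet_s1 /tet_s2 /tet_s3 /F1 /cA /cB /cC /cAp /cBp /cCp.
ring.
Qed.

Lemma nz_sum (k : fieldType) (a : k) : a / 2%:R != 0 -> a != 0.
Proof. by apply: contra => /eqP ->; rewrite mul0r. Qed.

Theorem lemma1 (k : fieldType) (L : closedFieldType) (iota : {rmorphism k -> L})
  (m1 m2 m3 m4 : k)
  (hchar2 : (2%:R : k) != 0) (hchar3 : (3%:R : k) != 0)
  (hm1 : m1 != 0) (hm2 : m2 != 0) (hm3 : m3 != 0) (hm4 : m4 != 0)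
  (hh1 : muh1 m1 m2 m3 m4 != 0) (hh2 : muh2 m1 m2 m3 m4 != 0)
  (hh3 : muh3 m1 m2 m3 m4 != 0) (hh4 : muh4 m1 m2 m3 m4 != 0)
  (hd1 : m1 * m4 != m2 * m3) (hd2 : m1 * m3 != m2 * m4) (hd3 : m1 * m2 != m3 * m4)
  (l1 l2 l3 l4 : L)
  (hnz : ~ [/\ l1 = 0, l2 = 0, l3 = 0 & l4 = 0])
  (hon : tet_eq (iota m1) (iota m2) (iota m3) (iota m4) l1 l2 l3 l4) :
  [/\ tet_K2 (iota m1) (iota m2) (iota m3) (iota m4) l1 l2 l3 = 0,
      tet_K3 (iota m1) (iota m2) (iota m3) (iota m4) l1 l2 l3 = 0
    & tet_K4 (iota m1) (iota m2) (iota m3) (iota m4) l1 l2 l3 = 0]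
  <-> [/\ l1 = 0, l2 = 0 & l3 = 0].
Proof.
split; last first.
  case=> -> -> ->.
  by rewrite /tet_K2 /tet_K3 /tet_K4; split; ring.
case=> hK2 hK3 hK4.
have h2 : (2%:R : L) != 0 by rewrite -(rmorph_nat iota) fmorph_eq0.
have hm : iota m1 * iota m2 * iota m3 * iota m4 != 0.
  by rewrite -!rmorphM fmorph_eq0 !mulf_neq0.
have hH : cH (iota m1) (iota m2) (iota m3) (iota m4) != 0.
  have -> : cH (iota m1) (iota m2) (iota m3) (iota m4) = iota (cH m1 m2 m3 m4).
    by rewrite /cH !(rmorphM, rmorphB, rmorphD).
  rewrite fmorph_eq0 /cH.
  have e1 := nz_sum hh1; have e2 := nz_sum hh2; have e3 := nz_sum hh3; have e4 := nz_sum hh4.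
  by rewrite !mulf_neq0.
have hA : cA (iota m1) (iota m2) (iota m3) (iota m4) != 0.
  by rewrite /cA -!rmorphM -rmorphB fmorph_eq0 subr_eq0.
have hB : cB (iota m1) (iota m2) (iota m3) (iota m4) != 0.
  by rewrite /cB -!rmorphM -rmorphB fmorph_eq0 subr_eq0.
have hC : cC (iota m1) (iota m2) (iota m3) (iota m4) != 0.
  by rewrite /cC -!rmorphM -rmorphB fmorph_eq0 subr_eq0.
have := delta (iota m1) (iota m2) (iota m3) (iota m4) l1 l2 l3 h2.
rewrite hK2 hK3 hK4 mul0r expr0n /= subr0 mulr0 => /eqP.
rewrite !mulf_eq0 => /orP [/orP [hF|hF]|hF].
- by case: (core hm hH hA hB hC h2 hK2 hK4 (eqP hF)).
- have := @core _ (iota m1) (iota m3) (iota m2) (iota m4) l1 l3 l2.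
  case.
  + by rewrite (_ : _ * _ * _ * _ = iota m1 * iota m2 * iota m3 * iota m4) //; ring.
  + by rewrite (_ : cH _ _ _ _ = cH (iota m1) (iota m2) (iota m3) (iota m4)) // /cH; ring.
  + by rewrite (_ : cA _ _ _ _ = cB (iota m1) (iota m2) (iota m3) (iota m4)) // /cA /cB; ring.
  + by rewrite (_ : cB _ _ _ _ = cA (iota m1) (iota m2) (iota m3) (iota m4)) // /cA /cB; ring.
  + by rewrite (_ : cC _ _ _ _ = cC (iota m1) (iota m2) (iota m3) (iota m4)) // /cC; ring.
  + by [].
  + by rewrite -hK2 /tet_K2 /tet_r1 /tet_r2 /tet_r3 /tet_s1 /tet_s2 /tet_s3; ring.
  + by rewrite -hK4 /tet_K4 /tet_r1 /tet_r2 /tet_r3 /tet_s1 /tet_s2 /tet_s3; ring.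
  + exact: (eqP hF).
  + by move=> -> -> ->.
- have := @core _ (iota m1) (iota m4) (iota m3) (iota m2) l3 l2 l1.
  case.
  + by rewrite (_ : _ * _ * _ * _ = iota m1 * iota m2 * iota m3 * iota m4) //; ring.
  + by rewrite (_ : cH _ _ _ _ = cH (iota m1) (iota m2) (iota m3) (iota m4)) // /cH; ring.
  + by rewrite (_ : cA _ _ _ _ = cC (iota m1) (iota m2) (iota m3) (iota m4)) // /cA /cC; ring.
  + by rewrite (_ : cB _ _ _ _ = cB (iota m1) (iota m2) (iota m3) (iota m4)) // /cB; ring.
  + by rewrite (_ : cC _ _ _ _ = cA (iota m1) (iota m2) (iota m3) (iota m4)) // /cA /cC; ring.
  + by [].
  + by rewrite -hK2 /tet_K2 /tet_r1 /tet_r2 /tet_r3 /tet_s1 /tet_s2 /tet_s3; ring.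
  + by rewrite -hK4 /tet_K4 /tet_r1 /tet_r2 /tet_r3 /tet_s1 /tet_s2 /tet_s3; ring.
  + exact: (eqP hF).
  + by move=> -> -> ->.
Qed.
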